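(* For every bijection $\phi:\mathbb N\to\mathbb N$, the map $\phi_*:(\mathrm{Conf}^{lf}_\infty(\mathbb C),d_{\Sigma})\to(\mathrm{Conf}^{lf}_\infty(\mathbb C),d_{\Sigma})$, $\phi_*((a_j)_{j\ge1})=(a_{\phi(j)})_{j\ge1}$, is continuous and in fact a homeomorphism.
   Context: $\mathrm{Conf}^{lf}_\infty(\mathbb C)$ is the set of sequences $x=(x_j)_{j\in\mathbb N}\in\mathbb C^{\mathbb N}$ with $x_i\ne x_j$ for $i\neq j$ and such that for every $R>0$ the set $\{j:|x_j|\le R\}$ is finite. $P(x)=\{x_j:j\in\mathbb N\}$, which lies in $C^{lf}_\infty(\mathbb C)$, the set of countably infinite locally finite subsets of $\mathbb C$. Let $d_{\mathrm{prod}}(x,y)=\sum_j 2^{-j}\min\{|x_j-y_j|,1\}$, and $d_{\Sigma}(x,y)=d_{\mathrm{prod}}(x,y)+d_{\mathcal V}(P(x),P(y))$, where $d_{\mathcal V}$ is the vague metric: for a fixed sequence $(\varphi_j)\subset C_c(\mathbb C)$ such that for each $m$ the $\varphi_j$ supported in $\{|z|\le m\}$ are sup-norm dense among compactly supported continuous real functions supported in $\{|z|\le m\}$, $d_{\mathcal V}(A,B)=\sum_j 2^{-j}\frac{|\sum_{a\in A}\varphi_j(a)-\sum_{b\in B}\varphi_j(b)|}{1+|\sum_{a\in A}\varphi_j(a)-\sum_{b\in B}\varphi_j(b)|}$. *)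

(* Defs.v *)
From Stdlib Require Import Reals.
From Coquelicot Require Import Coquelicot.
Open Scope R_scope.

(* Indexing convention: the paper's index set N = {1,2,3,...}; we use Rocq's
   nat = {0,1,2,...} with the shift j <-> j+1, so a sequence x : nat -> C has
   x k = x_{k+1}, and the weight 2^{-j} becomes (1/2)^(k+1). *)

Definition Conf (x : nat -> C) : Prop :=
  (forall i j : nat, i <> j -> x i <> x j) /\
  (forall R : R, 0 < R -> exists N : nat, forall j : nat, Cmod (x j) <= R -> (j < N)%nat).

Definition d_prod (x y : nat -> C) : R :=
  Series (fun j => (1/2) ^ (S j) * Rmin (Cmod (Cminus (x j) (y j))) 1).

(* sum_{a in P(x)} f(a); for x injective this is the sum over indices,
   which has only finitely many nonzero terms when f has compact support
   and x is locally finite. *)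
Definition config_sum (f : C -> R) (x : nat -> C) : R :=
  Series (fun k => f (x k)).

Definition d_V (phi : nat -> C -> R) (x y : nat -> C) : R :=
  Series (fun j =>
    (1/2) ^ (S j) *
    (Rabs (config_sum (phi j) x - config_sum (phi j) y) /
     (1 + Rabs (config_sum (phi j) x - config_sum (phi j) y)))).

Definition d_Sigma (phi : nat -> C -> R) (x y : nat -> C) : R :=
  d_prod x y + d_V phi x y.

Definition supported_in (f : C -> R) (m : R) : Prop :=
  forall z : C, m < Cmod z -> f z = 0.

Definition continuous_fun (f : C -> R) : Prop :=
  forall z : C, continuous f z.

Definition vague_test_seq (phi : nat -> C -> R) : Prop :=
  (forall j, continuous_fun (phi j) /\ exists m : R, supported_in (phi j) m) /\
  (forall m : nat, forall f : C -> R,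
     continuous_fun f -> supported_in f (INR m) ->
     forall eps : R, 0 < eps ->
     exists j : nat, supported_in (phi j) (INR m) /\
       forall z : C, Rabs (f z - phi j z) < eps).

Definition bijection (s : nat -> nat) : Prop :=
  (forall n m, s n = s m -> n = m) /\ (forall m, exists n, s n = m).

Definition reindex (s : nat -> nat) (x : nat -> C) : nat -> C :=
  fun j => x (s j).

Definition continuous_on_Conf (d : (nat -> C) -> (nat -> C) -> R)
  (F : (nat -> C) -> (nat -> C)) : Prop :=
  forall x, Conf x -> forall eps, 0 < eps -> exists delta, 0 < delta /\
    forall y, Conf y -> d x y < delta -> d (F x) (F y) < eps.

Definition homeomorphism_on_Conf (d : (nat -> C) -> (nat -> C) -> R)
  (F : (nat -> C) -> (nat -> C)) : Prop :=
  (forall x, Conf x -> Conf (F x)) /\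
  continuous_on_Conf d F /\
  exists G : (nat -> C) -> (nat -> C),
    (forall x, Conf x -> Conf (G x)) /\
    (forall x, Conf x -> G (F x) = x) /\
    (forall x, Conf x -> F (G x) = x) /\
    continuous_on_Conf d G.

(* Main.v *)
Require Import Defs.
From Stdlib Require Import Reals.
From Coquelicot Require Import Coquelicot.
From Stdlib Require Import Lra Lia Arith FunctionalExtensionality IndefiniteDescription.
Open Scope R_scope.


Lemma zero_series : is_series (fun _ : nat => 0) 0.
Proof.
  assert (H := is_series_scal_l 0 _ _ (is_series_geom (1/2) ltac:(rewrite Rabs_pos_eq; lra))).
  eapply is_series_ext in H.
  2:{ intros n. change (scal 0 ((1/2)^n)) with (0 * (1/2)^n). rewrite Rmult_0_l. reflexivity. }
  change (scal 0 (/(1 - 1/2))) with (0 * /(1-1/2)) in H. rewrite Rmult_0_l in H. exact H.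
Qed.

Lemma Series_zero_ext (a : nat -> R) : (forall n, a n = 0) -> Series a = 0.
Proof.
  intros H. apply is_series_unique. eapply is_series_ext. 2: apply zero_series.
  intros n; rewrite H; reflexivity.
Qed.

Lemma ex_series_finite (g : nat -> R) (N : nat) :
  (forall k, (k > N)%nat -> g k = 0) -> ex_series g.
Proof.
  intros H. apply (ex_series_incr_n g (S N)).
  exists 0. eapply is_series_ext. 2: apply zero_series. intros n; rewrite H; [reflexivity|lia].
Qed.

Lemma Series_finite (g : nat -> R) (N : nat) :
  (forall k, (k > N)%nat -> g k = 0) -> Series g = sum_f_R0 g N.
Proof.
  intros H. rewrite (Series_incr_n g (S N)); [|lia| eapply ex_series_finite; eauto].
  simpl. rewrite Series_zero_ext; [lra|]. intros n; apply H; lia.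
Qed.

Lemma geo_tail (N : nat) : is_series (fun k => (1/2)^(S (N + k))) ((1/2)^N).
Proof.
  assert (H := is_series_scal_l ((1/2)^(S N)) _ _ (is_series_geom (1/2) ltac:(rewrite Rabs_pos_eq; lra))).
  eapply is_series_ext in H.
  2:{ intros n. change (scal ((1/2)^(S N)) ((1/2)^n)) with ((1/2)^(S N) * (1/2)^n).
      rewrite <- pow_add. reflexivity. }
  change (scal ((1/2)^(S N)) (/(1 - 1/2))) with ((1/2)^(S N) * /(1-1/2)) in H.
  replace ((1/2)^(S N) * /(1-1/2)) with ((1/2)^N) in H by (simpl; field).
  exact H.
Qed.

Section Gen.
Variable a : nat -> R.
Hypothesis Ha : forall j, 0 <= a j <= (1/2)^(S j).

Lemma gen_ex : ex_series a.
Proof.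
  apply (ex_series_le a (fun j => (1/2)^(S j))).
  - intros n. change (norm (a n)) with (Rabs (a n)). rewrite Rabs_pos_eq; apply Ha.
  - eexists. eapply is_series_ext. 2: apply (geo_tail 0). intros n; reflexivity.
Qed.

Lemma gen_nonneg : 0 <= Series a.
Proof.
  rewrite <- (Series_zero_ext (fun _ => 0)) by auto.
  apply Series_le; [intros; split; [lra| apply Ha] | apply gen_ex].
Qed.

Lemma sum_nonneg_aux (N : nat) : 0 <= sum_f_R0 a N.
Proof. induction N; simpl; [apply Ha| specialize (Ha (S N)); lra]. Qed.

Lemma gen_term (k : nat) : a k <= Series a.
Proof.
  rewrite (Series_incr_n a (S k)); [|lia|apply gen_ex]. simpl pred.
  assert (0 <= Series (fun n => a (S k + n))).
  { rewrite <- (Series_zero_ext (fun _ => 0)) by auto.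
    apply Series_le; [intros; split; [lra| apply Ha] | ].
    apply (ex_series_incr_n a (S k)), gen_ex. }
  assert (a k <= sum_f_R0 a k).
  { destruct k; simpl; [lra|]. pose proof (sum_nonneg_aux k). lra. }
  lra.
Qed.

Lemma gen_upper (N : nat) : Series a <= sum_f_R0 a N + (1/2)^(S N).
Proof.
  rewrite (Series_incr_n a (S N)); [|lia|apply gen_ex]. simpl pred.
  apply Rplus_le_compat_l.
  rewrite <- (is_series_unique _ _ (geo_tail (S N))).
  apply Series_le; [intros n; apply Ha | eexists; apply geo_tail].
Qed.
End Gen.

Lemma sum_single (u : nat -> R) (j0 : nat) :
  (forall j, j <> j0 -> u j = 0) ->
  forall M, sum_f_R0 u M = if Nat.leb j0 M then u j0 else 0.
Proof.
  intros H M. induction M.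
  - simpl. destruct j0; simpl; [reflexivity|]. apply H; lia.
  - rewrite tech5, IHM. destruct (Nat.eq_dec j0 (S M)) as [->|ne].
    + destruct (Nat.leb_spec (S M) M); [lia|].
      destruct (Nat.leb_spec (S M) (S M)); [lra|lia].
    + rewrite (H (S M)) by lia.
      destruct (Nat.leb_spec j0 M); destruct (Nat.leb_spec j0 (S M)); try lia; lra.
Qed.

Section Perm.
Variable s : nat -> nat.
Hypothesis sinj : forall n m, s n = s m -> n = m.
Hypothesis ssurj : forall m, exists n, s n = m.

Lemma perm_single (h : nat -> R) (t : nat) :
  (forall k, k <> t -> h k = 0) ->
  forall M, (forall j, (j > M)%nat -> h (s j) = 0) ->
  sum_f_R0 (fun j => h (s j)) M = h t.
Proof.
  intros H M HM. destruct (ssurj t) as [j0 Hj0].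
  rewrite (sum_single _ j0).
  - destruct (Nat.leb j0 M) eqn:E; [now rewrite Hj0|].
    apply Nat.leb_gt in E. rewrite <- Hj0. symmetry; apply HM; lia.
  - intros j ne. apply H. intros e. apply ne, sinj. congruence.
Qed.

Lemma perm_sum (N : nat) : forall (h : nat -> R),
  (forall k, (k > N)%nat -> h k = 0) ->
  forall M, (forall j, (j > M)%nat -> h (s j) = 0) ->
  sum_f_R0 (fun j => h (s j)) M = sum_f_R0 h N.
Proof.
  induction N; intros h Hh M HM.
  - simpl. apply perm_single; [|exact HM]. intros k ne; apply Hh; lia.
  - set (h0 := fun k => if Nat.eq_dec k (S N) then 0 else h k).
    set (h1 := fun k => if Nat.eq_dec k (S N) then h k else 0).
    assert (E : forall k, h k = h0 k + h1 k).
    { intros k; unfold h0, h1; destruct (Nat.eq_dec k (S N)); lra. }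
    rewrite (sum_eq (fun j => h (s j)) (fun j => h0 (s j) + h1 (s j))) by (intros; apply E).
    rewrite sum_plus. simpl.
    rewrite (IHN h0).
    + rewrite (perm_single h1 (S N)).
      * unfold h1. destruct (Nat.eq_dec (S N) (S N)); [|lia].
        f_equal. apply sum_eq. intros i Hi. unfold h0.
        destruct (Nat.eq_dec i (S N)); [lia|reflexivity].
      * intros k ne; unfold h1; destruct (Nat.eq_dec k (S N)); [lia|reflexivity].
      * intros j Hj; unfold h1; destruct (Nat.eq_dec (s j) (S N)); [apply HM; auto|reflexivity].
    + intros k Hk; unfold h0; destruct (Nat.eq_dec k (S N)); [reflexivity|apply Hh; lia].
    + intros j Hj; unfold h0; destruct (Nat.eq_dec (s j) (S N)); [reflexivity|apply HM; auto].
Qed.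

Lemma preimage_bound (N : nat) : exists N', forall j, (s j < N)%nat -> (j < N')%nat.
Proof.
  induction N.
  - exists 0%nat. intros; lia.
  - destruct IHN as [N' HN']. destruct (ssurj N) as [j0 Hj0].
    exists (Nat.max N' (S j0)). intros j Hj.
    destruct (Nat.eq_dec (s j) N).
    + assert (j = j0) by (apply sinj; congruence). lia.
    + specialize (HN' j ltac:(lia)). lia.
Qed.
End Perm.

Lemma half_pow (n : nat) : 0 < (1/2)^n <= 1.
Proof. induction n; simpl; [lra|]. split; [|nra]. apply Rmult_lt_0_compat; lra. Qed.

Lemma two_half (n : nat) : 2^n * (1/2)^n = 1.
Proof. rewrite <- Rpow_mult_distr. replace (2 * (1/2)) with 1 by field. apply pow1. Qed.

Lemma prod_term (x y : nat -> C) (j : nat) :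
  0 <= (1/2)^(S j) * Rmin (Cmod (Cminus (x j) (y j))) 1 <= (1/2)^(S j).
Proof.
  pose proof (half_pow (S j)). pose proof (Cmod_ge_0 (Cminus (x j) (y j))).
  assert (0 <= Rmin (Cmod (Cminus (x j) (y j))) 1) by (apply Rmin_glb; lra).
  pose proof (Rmin_r (Cmod (Cminus (x j) (y j))) 1). split; nra.
Qed.

Lemma V_term (u v : R) (j : nat) :
  0 <= (1/2)^(S j) * (Rabs (u - v) / (1 + Rabs (u - v))) <= (1/2)^(S j).
Proof.
  pose proof (half_pow (S j)). pose proof (Rabs_pos (u - v)).
  assert (0 <= Rabs (u - v) / (1 + Rabs (u - v)) <= 1).
  { split. apply Rdiv_le_0_compat; lra.
    apply (Rmult_le_reg_r (1 + Rabs (u - v))); [lra|].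
    unfold Rdiv. rewrite Rmult_assoc, Rinv_l by lra. lra. }
  split; nra.
Qed.

Lemma d_prod_nonneg x y : 0 <= d_prod x y.
Proof. apply gen_nonneg. intros; apply prod_term. Qed.

Lemma d_V_nonneg phi x y : 0 <= d_V phi x y.
Proof. apply gen_nonneg. intros; apply V_term. Qed.

Lemma conf_reindex (s : nat -> nat) (x : nat -> C) :
  bijection s -> Conf x -> Conf (reindex s x).
Proof.
  intros [sinj ssurj] [Hi Hl]. split.
  - intros i j ne. unfold reindex. apply Hi. intros e; apply ne, sinj, e.
  - intros R0 HR. destruct (Hl R0 HR) as [N HN].
    destruct (preimage_bound s sinj ssurj N) as [N' HN'].
    exists N'. intros j Hj. apply HN', HN, Hj.
Qed.

Lemma config_sum_finite (f : C -> R) (x : nat -> C) :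
  Conf x -> (exists m, supported_in f m) ->
  exists N, forall k, (k > N)%nat -> f (x k) = 0.
Proof.
  intros [_ Hl] [m Hm]. destruct (Hl (Rmax m 1)) as [N HN].
  { pose proof (Rmax_r m 1). lra. }
  exists N. intros k Hk. apply Hm.
  destruct (Rle_or_lt (Cmod (x k)) (Rmax m 1)) as [h|h].
  - specialize (HN k h). lia.
  - pose proof (Rmax_l m 1). lra.
Qed.

Lemma config_sum_reindex (s : nat -> nat) (f : C -> R) (x : nat -> C) :
  bijection s -> Conf x -> (exists m, supported_in f m) ->
  config_sum f (reindex s x) = config_sum f x.
Proof.
  intros Hs Hx Hf.
  destruct (config_sum_finite f x Hx Hf) as [N HN].
  destruct (config_sum_finite f (reindex s x) (conf_reindex s x Hs Hx) Hf) as [M HM].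
  unfold config_sum. rewrite (Series_finite _ N HN), (Series_finite _ M HM).
  destruct Hs as [sinj ssurj].
  apply (perm_sum s sinj ssurj N (fun k => f (x k)) HN M HM).
Qed.

Lemma d_V_reindex phi s x y :
  vague_test_seq phi -> bijection s -> Conf x -> Conf y ->
  d_V phi (reindex s x) (reindex s y) = d_V phi x y.
Proof.
  intros [Hphi _] Hs Hx Hy. unfold d_V. apply Series_ext. intros j.
  rewrite !(config_sum_reindex s) by (auto; apply Hphi). reflexivity.
Qed.

Lemma sum_pos (u : nat -> R) N : (forall j, 0 < u j) -> 0 < sum_f_R0 u N.
Proof. intros H; induction N; simpl; [apply H|]. specialize (H (S N)); lra. Qed.

Lemma cont_reindex phi s :
  vague_test_seq phi -> bijection s -> continuous_on_Conf (d_Sigma phi) (reindex s).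
Proof.
  intros Hphi Hs x Hx eps Heps.
  destruct (pow_lt_1_zero (1/2) ltac:(rewrite Rabs_pos_eq; lra) (eps/4) ltac:(lra)) as [N HN].
  specialize (HN N (le_n N)). pose proof (half_pow N) as HhN.
  rewrite Rabs_pos_eq in HN by lra.
  set (K := sum_f_R0 (fun j => 2^(S (s j))) N).
  assert (HK : 0 < K) by (apply sum_pos; intros; apply pow_lt; lra).
  exists (Rmin (eps/2) (eps/(4*K))). split.
  { apply Rmin_glb_lt; [lra|]. apply Rdiv_lt_0_compat; lra. }
  intros y Hy Hd. unfold d_Sigma in *.
  rewrite (d_V_reindex phi s x y Hphi Hs Hx Hy).
  pose proof (d_prod_nonneg x y). pose proof (d_V_nonneg phi x y).
  pose proof (Rmin_l (eps/2) (eps/(4*K))). pose proof (Rmin_r (eps/2) (eps/(4*K))).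
  set (d := d_prod x y) in *.
  assert (Hup : d_prod (reindex s x) (reindex s y) <= d * K + (1/2)^N).
  { unfold d_prod at 1.
    eapply Rle_trans. { apply (gen_upper _ (fun j => prod_term _ _ j) N). }
    assert ((1/2)^(S N) <= (1/2)^N) by (simpl; lra).
    enough (sum_f_R0 (fun j => (1/2)^(S j) * Rmin (Cmod (Cminus (reindex s x j) (reindex s y j))) 1) N <= d * K) by lra.
    unfold K. rewrite scal_sum. apply sum_Rle. intros j _.
    unfold reindex.
    pose proof (gen_term _ (fun j => prod_term x y j) (s j)) as Ht. fold (d_prod x y) in Ht. fold d in Ht. cbv beta in Ht.
    pose proof (prod_term x y (s j)).
    pose proof (half_pow (S j)). pose proof (two_half (S (s j))).
    pose proof (Cmod_ge_0 (Cminus (x (s j)) (y (s j)))).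
    set (r := Rmin (Cmod (Cminus (x (s j)) (y (s j)))) 1) in *.
    assert (0 <= r) by (apply Rmin_glb; lra).
    assert (r = 2^(S (s j)) * ((1/2)^(S (s j)) * r)) by (rewrite <- Rmult_assoc; nra).
    assert (0 < 2^(S (s j))) by (apply pow_lt; lra).
    assert ((1/2)^(S j) * r <= r) by nra.
    assert (2^(S (s j)) * ((1/2)^(S (s j)) * r) <= 2^(S (s j)) * d) by (apply Rmult_le_compat_l; [lra|]; lra).
    lra. }
  assert (d * K < eps/4).
  { assert (d * K < eps/(4*K) * K) by (apply Rmult_lt_compat_r; lra).
    replace (eps/(4*K) * K) with (eps/4) in H3 by (field; lra). exact H3. }
  lra.
Qed.

Theorem mainTheorem3 (phi : nat -> C -> R) (s : nat -> nat) :
  vague_test_seq phi -> bijection s ->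
  continuous_on_Conf (d_Sigma phi) (reindex s) /\
  homeomorphism_on_Conf (d_Sigma phi) (reindex s).
Proof.
  intros Hphi Hs.
  pose proof (cont_reindex phi s Hphi Hs) as Hc.
  destruct Hs as [sinj ssurj] eqn:EHs.
  set (sinv := fun m => proj1_sig (constructive_indefinite_description _ (ssurj m))).
  assert (Hsi : forall m, s (sinv m) = m).
  { intros m; unfold sinv; destruct (constructive_indefinite_description _ _); auto. }
  assert (Hbi : bijection sinv).
  { split.
    - intros n m e. rewrite <- (Hsi n), <- (Hsi m), e. reflexivity.
    - intros m. exists (s m). apply sinj. apply Hsi. }
  split; [exact Hc|]. split; [intros; apply conf_reindex; auto|]. split; [exact Hc|].
  exists (reindex sinv). split; [intros; apply conf_reindex; auto|].
  split; [|split].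
  - intros x _. apply functional_extensionality. intros j. unfold reindex.
    rewrite Hsi. reflexivity.
  - intros x _. apply functional_extensionality. intros j. unfold reindex. f_equal. apply sinj. rewrite Hsi. reflexivity.
  - apply cont_reindex; auto.
Qed.
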